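(* Let $\Bbbk$ be a field with $\operatorname{char}\Bbbk\ne2$, let $X$ be a linearly ordered set, and let $\Lambda_X=\mathrm{DiAs}\langle X\rangle/I$, where $I$ is the ideal generated by $\{x\dashv y+y\vdash x: x,y\in X\}$. Then the images of the words $\dot x_1x_2\cdots x_k$ with $k\ge1$, $x_i\in X$, $x_2<x_3<\dots<x_k$ form a linear basis of $\Lambda_X$.
   Context: An associative dialgebra is a vector space with bilinear operations $\vdash,\dashv$ satisfying $(x\dashv y)\vdash z=(x\vdash y)\vdash z$, $x\dashv(y\vdash z)=x\dashv(y\dashv z)$, $(x\vdash y)\vdash z=x\vdash(y\vdash z)$, $(x\dashv y)\dashv z=x\dashv(y\dashv z)$, $(x\vdash y)\dashv z=x\vdash(y\dashv z)$. $\mathrm{DiAs}\langle X\rangle$ is the free associative dialgebra on $X$, with basis the words $x_1\cdots\dot x_k\cdots x_n$ meaning $x_1\vdash\cdots\vdash x_{k-1}\vdash x_k\dashv x_{k+1}\dashv\cdots\dashv x_n$; thus $\dot x_1x_2\cdots x_k=x_1\dashv x_2\dashv\cdots\dashv x_k$. *)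

(* Defs.v *)
From HB Require Import structures.
From mathcomp Require Import all_boot all_order all_algebra.
Set Implicit Arguments. Unset Strict Implicit. Unset Printing Implicit Defensive.
Import Order.TTheory GRing.Theory.

(* A basis word  x_1 ... \dot x_m ... x_n  is the pair (s, m-1) where
   s = [:: x_1; ...; x_n] and the marked position m-1 < size s. *)
Section DiAs.
Variable (k : fieldType) (d : Order.disp_t) (X : orderType d).

Definition word := (seq X * nat)%type.

Definition valid_word (w : word) : bool := w.2 < size w.1.

(* u |- v : the centre is the centre of v;  u -| v : the centre is that of u *)
Definition wvdash (u v : word) : word := (u.1 ++ v.1, size u.1 + v.2).
Definition wdashv (u v : word) : word := (u.1 ++ v.1, u.2).

(* An element of DiAs<X>: a formal finite linear combination of words,
   identified up to equality of coefficient functions. *)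
Definition lc := seq (k * word).

Definition coef (a : lc) (w : word) : k :=
  (\sum_(p <- a | p.2 == w) p.1)%R.

Definition lc_scale (c : k) (a : lc) : lc := [seq (c * p.1, p.2)%R | p <- a].

Definition lc_vdash (a b : lc) : lc :=
  [seq ((p.1 * q.1)%R, wvdash p.2 q.2) | p <- a, q <- b].
Definition lc_dashv (a b : lc) : lc :=
  [seq ((p.1 * q.1)%R, wdashv p.2 q.2) | p <- a, q <- b].

Definition letter (x : X) : word := ([:: x], 0%N).

Definition gen_rel (x y : X) : lc :=
  [:: (1%R, wdashv (letter x) (letter y)); (1%R, wvdash (letter y) (letter x))].

(* I = the (two-sided) dialgebra ideal generated by the gen_rel x y:
   the smallest subspace containing them and stable under |- and -| by
   arbitrary elements on both sides (by bilinearity, basis words suffice). *)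
Inductive inI : lc -> Prop :=
| inI_gen x y : inI (gen_rel x y)
| inI_add a b : inI a -> inI b -> inI (a ++ b)
| inI_scale c a : inI a -> inI (lc_scale c a)
| inI_vdash_l w a : valid_word w -> inI a -> inI (lc_vdash [:: (1%R, w)] a)
| inI_vdash_r w a : valid_word w -> inI a -> inI (lc_vdash a [:: (1%R, w)])
| inI_dashv_l w a : valid_word w -> inI a -> inI (lc_dashv [:: (1%R, w)] a)
| inI_dashv_r w a : valid_word w -> inI a -> inI (lc_dashv a [:: (1%R, w)])
| inI_coef a b : inI a -> coef a =1 coef b -> inI b.

Definition basic_word (w : word) : bool :=
  if w.1 is _ :: s then (w.2 == 0%N) && sorted (fun x y : X => (x < y)%O) s
  else false.

End DiAs.

(* Main.v *)
Require Import Defs.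
From mathcomp Require Import all_boot all_order all_algebra.
From mathcomp Require Import ring.
Set Implicit Arguments. Unset Strict Implicit. Unset Printing Implicit Defensive.
Import Order.TTheory GRing.Theory.
Local Open Scope ring_scope.

Section Work.
Variable (k : fieldType) (d : Order.disp_t) (X : orderType d).
Notation word := (word X).
Notation lc := (lc k X).

Definition ev (h : word -> k) (a : lc) : k := \sum_(p <- a) p.1 * h p.2.

Lemma ev_nil h : ev h [::] = 0.
Proof. by rewrite /ev big_nil. Qed.
Lemma ev_cons h p a : ev h (p :: a) = p.1 * h p.2 + ev h a.
Proof. by rewrite /ev big_cons. Qed.
Lemma ev_cat h a b : ev h (a ++ b) = ev h a + ev h b.
Proof. by rewrite /ev big_cat. Qed.
Lemma ev_scale h c a : ev h (lc_scale c a) = c * ev h a.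
Proof.
rewrite /ev /lc_scale big_map mulr_sumr; apply: eq_bigr => p _ /=.
by rewrite mulrA.
Qed.

Lemma coef_ev a u : coef a u = ev (fun v => (v == u)%:R) a.
Proof.
rewrite /coef /ev big_mkcond; apply: eq_bigr => p _ /=.
by case: (p.2 == u); rewrite ?mulr1 ?mulr0.
Qed.

Lemma ev_map f h a : ev h [seq (1 * q.1, f q.2) | q <- a] = ev (fun v => h (f v)) a.
Proof. by rewrite /ev big_map; apply: eq_bigr => p _; rewrite mul1r. Qed.

Lemma ev_vdash_l w h a : ev h (lc_vdash [:: (1, w)] a) = ev (fun v => h (wvdash w v)) a.
Proof. by rewrite /lc_vdash /= cats0 ev_map. Qed.
Lemma ev_dashv_l w h a : ev h (lc_dashv [:: (1, w)] a) = ev (fun v => h (wdashv w v)) a.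
Proof. by rewrite /lc_dashv /= cats0 ev_map. Qed.
Lemma ev_vdash_r w h a : ev h (lc_vdash a [:: (1, w)]) = ev (fun v => h (wvdash v w)) a.
Proof.
elim: a => [|p a IH]; first by rewrite /lc_vdash /= !ev_nil.
by rewrite /lc_vdash allpairs_cons /= ev_cons -/(lc_vdash _ _) IH ev_cons mulr1.
Qed.
Lemma ev_dashv_r w h a : ev h (lc_dashv a [:: (1, w)]) = ev (fun v => h (wdashv v w)) a.
Proof.
elim: a => [|p a IH]; first by rewrite /lc_dashv /= !ev_nil.
by rewrite /lc_dashv allpairs_cons /= ev_cons -/(lc_dashv _ _) IH ev_cons mulr1.
Qed.

Lemma ev_rep h a (s : seq word) : uniq s -> {subset [seq p.2 | p <- a] <= s} ->
  ev h a = \sum_(u <- s) coef a u * h u.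
Proof.
move=> us; elim: a => [|p a IH] sub.
  by rewrite ev_nil big1 // => u _; rewrite /coef big_nil mul0r.
rewrite ev_cons IH; last by move=> u hu; apply: sub; rewrite /= inE hu orbT.
have ps : p.2 \in s by apply: sub; rewrite /= inE eqxx.
rewrite [RHS](eq_bigr (fun u => (if p.2 == u then p.1 * h u else 0) + coef a u * h u)); last first.
  by move=> u _; rewrite /coef big_cons; case: ifP => _; rewrite ?mulrDl ?add0r.
rewrite big_split /=; congr (_ + _).
rewrite (bigD1_seq p.2) //= eqxx big1 ?addr0 // => u /negbTE hu.
by rewrite eq_sym hu.
Qed.

Lemma ev_coef h a b : coef a =1 coef b -> ev h a = ev h b.
Proof.
move=> e; set s := undup [seq p.2 | p <- a ++ b].
rewrite (@ev_rep h a s) ?(@ev_rep h b s) ?undup_uniq //.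
- by apply: eq_bigr => u _; rewrite e.
- by move=> u hu; rewrite mem_undup map_cat mem_cat hu orbT.
- by move=> u hu; rewrite mem_undup map_cat mem_cat hu.
Qed.

Definition inv1 (a : lc) := forall u, ~~ valid_word u -> coef a u = 0.

Lemma ev_agree g g' a : inv1 a -> (forall v, valid_word v -> g v = g' v) -> ev g a = ev g' a.
Proof.
move=> ia e; set s := undup [seq p.2 | p <- a].
rewrite (@ev_rep g a s) ?(@ev_rep g' a s) ?undup_uniq //; try by move=> u; rewrite mem_undup.
apply: eq_bigr => u _; case vu: (valid_word u); first by rewrite e.
by rewrite ia ?vu // !mul0r.
Qed.


Definition alt (F : X -> seq X -> k) :=
  forall x A y z B, F x (A ++ y :: z :: B) = - F x (A ++ z :: y :: B).

Definition G (F : X -> seq X -> k) (w : word) : k :=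
  match drop w.2 w.1 with y :: B => (-1) ^+ w.2 * F y (take w.2 w.1 ++ B) | [::] => 0 end.

Lemma G_eq F A y B : G F (A ++ y :: B, size A) = (-1) ^+ size A * F y (A ++ B).
Proof. by rewrite /G /= drop_size_cat // take_size_cat. Qed.

Lemma valid_dec (w : word) : valid_word w -> exists A y B, w = (A ++ y :: B, size A).
Proof.
case: w => s m; rewrite /valid_word /= => h.
case e: (drop m s) => [|y B].
  by move: (size_drop m s); rewrite e /=; move/eqP; rewrite eq_sym subn_eq0 leqNgt h.
exists (take m s), y, B; rewrite -e cat_take_drop size_take h //.
Qed.

Lemma alt_move F : alt F -> forall x P A y C,
  F x (P ++ A ++ y :: C) = (-1) ^+ size A * F x (P ++ y :: A ++ C).
Proof.
move=> hF x P A y C; elim: A P => [|a A IH] P /=; first by rewrite expr0 mul1r.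
rewrite -cat_rcons IH cat_rcons hF exprS; ring.
Qed.

Definition closedG (f : word -> word) := forall F, alt F ->
  exists F', alt F' /\ forall v, valid_word v -> G F (f v) = G F' v.

Lemma closed_dashv_l w : valid_word w -> closedG (wdashv w).
Proof.
move=> /valid_dec [A [y [B ->]]] F hF.
exists (fun z r => (-1) ^+ size A * F y ((A ++ B) ++ z :: r)); split.
  move=> z E p q R /=; rewrite -!catA /=; have := hF y (A ++ B ++ z :: E) p q R; rewrite -!catA /= => ->; by rewrite mulrN.
move=> v /valid_dec [C [z [D ->]]]; rewrite /wdashv /=.
rewrite -catA /= G_eq G_eq catA alt_move //; ring.
Qed.

Lemma closed_dashv_r w : valid_word w -> closedG (fun v => wdashv v w).
Proof.
move=> /valid_dec [A [y [B ->]]] F hF.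
exists (fun z r => F z (r ++ A ++ y :: B)); split.
  by move=> z E p q R /=; rewrite -!catA /= hF.
move=> v /valid_dec [C [z [D ->]]]; rewrite /wdashv /=.
by rewrite -catA /= G_eq G_eq catA.
Qed.

Lemma closed_vdash_l w : valid_word w -> closedG (wvdash w).
Proof.
move=> /valid_dec [A [y [B ->]]] F hF.
exists (fun z r => (-1) ^+ size (A ++ y :: B) * F z ((A ++ y :: B) ++ r)); split.
  by move=> z E p q R /=; rewrite !catA hF mulrN.
move=> v /valid_dec [C [z [D ->]]]; rewrite /wvdash /=.
rewrite catA -size_cat G_eq G_eq size_cat exprD catA; ring.
Qed.

Lemma closed_vdash_r w : valid_word w -> closedG (fun v => wvdash v w).
Proof.
move=> /valid_dec [A [y [B ->]]] F hF.
exists (fun z r => (-1) ^+ (size r + 1 + size A)%N * F y (z :: r ++ A ++ B)); split.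
  move=> z E p q R /=; rewrite !size_cat /= -!catA /=.
  have := hF y (z :: E) p q (R ++ A ++ B); rewrite /= => ->; ring.
move=> v /valid_dec [C [z [D ->]]]; rewrite /wvdash /=.
have E1 : (size (C ++ z :: D) + size A)%N = size ((C ++ z :: D) ++ A).
  by rewrite !size_cat.
rewrite E1.
rewrite catA G_eq G_eq -!catA /=.
have := alt_move hF y [::] C z (D ++ A ++ B); rewrite /= => ->.
rewrite !size_cat /= !exprD exprS size_cat exprD expr1 catA; ring.
Qed.


Definition inv2 (a : lc) := forall F, alt F -> ev (G F) a = 0.

Lemma inv_prod (f : word -> word) (a b : lc) :
  (forall v, valid_word v -> valid_word (f v)) -> closedG f ->
  (forall h, ev h b = ev (fun v => h (f v)) a) ->
  inv1 a /\ inv2 a -> inv1 b /\ inv2 b.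
Proof.
move=> vf cf eb [i1 i2]; split.
  move=> u hu; rewrite coef_ev eb (@ev_agree _ (fun _ => 0)) //.
    by rewrite /ev big1 // => p _; rewrite mulr0.
  move=> v vv; case: eqP => // e; by move: hu; rewrite -e vf.
move=> F hF; have [F' [hF' e]] := cf F hF.
by rewrite eb (@ev_agree _ (G F')) // i2.
Qed.

Lemma neq_valid (w u : word) : valid_word w -> ~~ valid_word u -> (w == u) = false.
Proof. by move=> hw hu; apply/eqP => e; move: hu; rewrite -e hw. Qed.

Lemma inI_inv a : inI a -> inv1 a /\ inv2 a.
Proof.
elim => {a}.
- move=> x y; split.
    move=> u hu; rewrite coef_ev /gen_rel !ev_cons ev_nil !neq_valid //.
    by rewrite !mulr0 !addr0.
  move=> F hF; rewrite /gen_rel !ev_cons ev_nil /G /=; rewrite expr1; ring.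
- move=> a b _ [i1 i2] _ [j1 j2]; split.
    by move=> u hu; rewrite coef_ev ev_cat -!coef_ev i1 // j1 // addr0.
  by move=> F hF; rewrite ev_cat i2 // j2 // addr0.
- move=> c a _ [i1 i2]; split.
    by move=> u hu; rewrite coef_ev ev_scale -coef_ev i1 // mulr0.
  by move=> F hF; rewrite ev_scale i2 // mulr0.
- move=> w a hw _ ia; apply: (inv_prod (f := wvdash w)) ia.
  + by move=> v; rewrite /valid_word /= size_cat ltn_add2l.
  + exact: closed_vdash_l.
  + by move=> h; rewrite ev_vdash_l.
- move=> w a hw _ ia; apply: (inv_prod (f := fun v => wvdash v w)) ia.
  + by move=> v _; rewrite /valid_word /= size_cat ltn_add2l.
  + exact: closed_vdash_r.
  + by move=> h; rewrite ev_vdash_r.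
- move=> w a hw _ ia; apply: (inv_prod (f := wdashv w)) ia.
  + by move=> v _; rewrite /valid_word /= size_cat (leq_trans hw) // leq_addr.
  + exact: closed_dashv_l.
  + by move=> h; rewrite ev_dashv_l.
- move=> w a hw _ ia; apply: (inv_prod (f := fun v => wdashv v w)) ia.
  + by move=> v hv; rewrite /valid_word /= size_cat (leq_trans hv) // leq_addr.
  + exact: closed_dashv_r.
  + by move=> h; rewrite ev_dashv_r.
- move=> a b _ [i1 i2] e; split.
    by move=> u hu; rewrite -e i1.
  by move=> F hF; rewrite -(ev_coef _ e) i2.
Qed.


Fixpoint ninv (r : seq X) : nat :=
  if r is a :: r' then (count (fun b => (b < a)%O) r' + ninv r')%N else 0%N.

Lemma perm_swap2 (A : seq X) y z B : perm_eq (A ++ y :: z :: B) (A ++ z :: y :: B).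
Proof. by rewrite perm_cat2l; apply/permP => p /=; rewrite addnCA. Qed.

Lemma ninv_swap A y z B : y != z ->
  (-1) ^+ ninv (A ++ y :: z :: B) = - (-1) ^+ ninv (A ++ z :: y :: B) :> k.
Proof.
move=> yz; elim: A => [|a A IH] /=.
  rewrite !exprD; case: (ltgtP y z) => h.
  - rewrite /= expr1 expr0; ring.
  - rewrite /= expr1 expr0; ring.
  - by move: yz; rewrite h eqxx.
by rewrite !exprD IH (permP (perm_swap2 A y z B)) mulrN.
Qed.

Definition Ft (x0 : X) (S : seq X) (z : X) (r : seq X) : k :=
  (z == x0)%:R * (if perm_eq r S then (-1) ^+ ninv r else 0).

Lemma alt_Ft x0 S : uniq S -> alt (Ft x0 S).
Proof.
move=> uS z A p q B; rewrite /Ft (permPl (perm_swap2 A p q B)).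
case hp: (perm_eq (A ++ q :: p :: B) S); last by rewrite mulr0 oppr0.
case: (eqVneq p q) => [e|pq].
  move: uS; rewrite -(perm_uniq hp) e cat_uniq /= inE eqxx /=.
  by rewrite !andbF.
by rewrite ninv_swap // mulrN.
Qed.

Lemma ninv_sorted S : pairwise (fun x y : X => (x < y)%O) S -> ninv S = 0%N.
Proof.
elim: S => [|a S IH] //= /andP [ha hS]; rewrite IH // addn0.
apply/eqP; rewrite -leqn0 leqNgt -has_count; apply/hasPn => b hb.
by rewrite lt_gtF // (allP ha).
Qed.

Lemma G_Ft x0 S (t : word) : sorted (fun x y : X => (x < y)%O) S -> basic_word t ->
  G (Ft x0 S) t = (t == (x0 :: S, 0%N))%:R.
Proof.
move=> sS; case: t => [[|x' S'] m] //; rewrite /basic_word /= => /andP [/eqP hm sS']; subst m.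
rewrite /G /= expr0 mul1r /Ft.
have pS : pairwise (fun x y : X => (x < y)%O) S by rewrite -lt_sorted_pairwise.
case: (eqVneq x' x0) => [->|ne]; last first.
  have -> : ((x' :: S', 0%N) == (x0 :: S, 0%N)) = false.
    by apply/eqP => -[e _]; move: ne; rewrite e eqxx.
  by rewrite mul0r.
rewrite mul1r; case hp: (perm_eq S' S).
  have e : S' = S.
    apply: le_sorted_eq => //; [exact: (sub_sorted (@ltW _ _)) sS' | exact: (sub_sorted (@ltW _ _)) sS].
  by rewrite e eqxx ninv_sorted.
have ne : (x0 :: S', 0%N) != (x0 :: S, 0%N).
  by apply/negP => /eqP [e]; move: hp; rewrite e perm_refl.
by rewrite (negbTE ne).
Qed.

Lemma indep (a : lc) : all (fun p => basic_word p.2) a -> inI a -> forall w, coef a w = 0.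
Proof.
move=> ha ia w; have [i1 i2] := inI_inv ia.
case bw: (basic_word w); last first.
  rewrite /coef big_seq_cond big1 // => p /andP [pa /eqP e].
  by move: (allP ha p pa); rewrite e bw.
case: w bw => [[|x0 S] m] //; rewrite /basic_word /= => /andP [/eqP hm sS]; subst m.
have uS : uniq S by apply: (sorted_uniq (@lt_trans _ _)) sS; exact: ltxx.
rewrite coef_ev -(i2 _ (alt_Ft x0 uS)) /ev; apply: eq_big_seq => p pa.
by rewrite G_Ft // (allP ha p pa).
Qed.


Lemma inI_ev (a b : lc) : inI a -> (forall h, ev h a = ev h b) -> inI b.
Proof. by move=> ia e; apply: (inI_coef ia) => u; rewrite !coef_ev e. Qed.

Definition Rl (a b : lc) := inI (a ++ lc_scale (-1) b).

Lemma R_ev a b a' b' : Rl a b -> (forall h, ev h a - ev h b = ev h a' - ev h b') -> Rl a' b'.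
Proof.
move=> r e; apply: (inI_ev r) => h; rewrite !ev_cat !ev_scale !mulN1r; exact: e.
Qed.

Lemma R_trans a b c : Rl a b -> Rl b c -> Rl a c.
Proof.
move=> r1 r2; apply: (inI_ev (inI_add r1 r2)) => h.
rewrite !ev_cat !ev_scale; ring.
Qed.

Lemma R_scale c a b : Rl a b -> Rl (lc_scale c a) (lc_scale c b).
Proof.
move=> r; apply: (inI_ev (inI_scale c r)) => h.
rewrite !ev_cat !ev_scale ev_cat !ev_scale; ring.
Qed.

Lemma R_refl (x : X) a : Rl a a.
Proof.
have i := inI_scale (0 : k) (inI_gen k x x). rewrite /Rl; apply: (inI_ev i) => h.
rewrite !ev_cat !ev_scale; ring.
Qed.

Lemma inI_lext v (a : lc) : inI a ->
  inI [seq (p.1, (v ++ p.2.1, size v + p.2.2)%N) | p <- a].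
Proof.
case: v => [|y v] ia.
  apply: (inI_ev ia) => h; rewrite /ev big_map; apply: eq_bigr => -[c [s m]] _ //.
have := inI_vdash_l (w := (y :: v, 0%N)) isT ia => ib.
apply: (inI_ev ib) => h; rewrite ev_vdash_l /ev big_map; apply: eq_bigr => -[c [s m]] _ //.
Qed.

Lemma inI_rext t (a : lc) : inI a ->
  inI [seq (p.1, (p.2.1 ++ t, p.2.2)) | p <- a].
Proof.
case: t => [|y t] ia.
  apply: (inI_ev ia) => h; rewrite /ev big_map; apply: eq_bigr => -[c [s m]] _ /=.
  by rewrite cats0.
have := inI_dashv_r (w := (y :: t, 0%N)) isT ia => ib.
apply: (inI_ev ib) => h; rewrite ev_dashv_r /ev big_map; apply: eq_bigr => -[c [s m]] _ //.
Qed.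

Lemma R1 v (x y : X) t :
  Rl [:: (1, (v ++ y :: x :: t, (size v).+1))] [:: (-1, (v ++ x :: y :: t, size v))].
Proof.
have := inI_rext t (inI_lext v (inI_gen k x y)) => i.
apply: (inI_ev i) => h; rewrite /= !ev_cons !ev_nil -!catA /= addn0 addn1; ring.
Qed.

Lemma R2 s m (a b : X) t : (m < size s)%N ->
  Rl [:: (1, (s ++ a :: b :: t, m))] [:: (-1, (s ++ b :: a :: t, m))].
Proof.
move=> hm; have := inI_rext t (inI_dashv_l (w := (s, m)) hm (inI_gen k a b)) => i.
apply: (inI_ev i) => h; rewrite /= ev_cons ev_cons /= -!catA /= !ev_cons !ev_nil /=; ring.
Qed.

Lemma R0 s m (a : X) t : (2%:R != 0 :> k) -> (m < size s)%N ->
  Rl [:: (1, (s ++ a :: a :: t, m))] [::].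
Proof.
move=> h2 hm; have := inI_scale (2%:R)^-1 (inI_rext t (inI_dashv_l (w := (s, m)) hm (inI_gen k a a))) => i.
apply: (inI_ev i) => h; rewrite ev_scale /= !ev_cons !ev_nil /= -!catA /=.
transitivity ((2%:R)^-1 * 2%:R * h (s ++ [:: a, a & t], m)); first ring.
rewrite mulVf //; ring.
Qed.


Notation ltX := (fun x y : X => (x < y)%O).

Lemma center m : forall s : seq X, (m < size s)%N ->
  exists x r (c : k), Rl [:: (1, (s, m))] [:: (c, (x :: r, 0%N))].
Proof.
elim: m => [|m IH] s hs.
  case: s hs => [|x r] // _; exists x, r, 1; exact: R_refl x _.
have [v [y [x [t [-> hv]]]]] : exists v y x t, s = v ++ y :: x :: t /\ size v = m.
  case e: (drop m s) => [|y [|x t]].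
  - by move: (size_drop m s); rewrite e /=; move/eqP; rewrite eq_sym subn_eq0 leqNgt (ltnW hs).
  - by move: (size_drop m s); rewrite e /= => /eqP; rewrite eq_sym -(eqn_add2r m) subnK ?(ltnW (ltnW hs)) // add1n => /eqP h; move: hs; rewrite -h ltnn.
  - exists (take m s), y, x, t; rewrite -e cat_take_drop size_take (ltnW hs); split => //.
subst m.
have hsz : (size v < size (v ++ x :: y :: t))%N by rewrite !size_cat /= addnS ltnS leq_addr.
have [x' [r' [c h]]] := IH (v ++ x :: y :: t) hsz.
exists x', r', (-1 * c).
apply: (R_trans (R1 v x y t)).
apply: (R_ev (R_scale (-1) h)) => f; rewrite /= !ev_cons !ev_nil /=; ring.
Qed.

Lemma pairwise_insert (P0 Q : seq X) z y : pairwise ltX (P0 ++ z :: Q) -> (z < y)%O ->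
  all (fun q => (y < q)%O) Q -> pairwise ltX (P0 ++ z :: y :: Q).
Proof.
move=> + hzy hQ; elim: P0 => [|a P0 IH] /=.
  by case/andP => hz hQ'; rewrite hzy hz hQ hQ'.
case/andP => ha hr; rewrite IH // andbT.
move: ha; rewrite !all_cat /= => /and3P [h1 h2 h3].
by rewrite h1 h2 h3 (lt_trans h2 hzy).
Qed.

Lemma insert (x : X) r' y : (2%:R != 0 :> k) -> forall P Q,
  pairwise ltX (P ++ Q) -> all (fun q => (y < q)%O) Q ->
  (exists c S, pairwise ltX S /\
     Rl [:: (1, (x :: P ++ y :: Q ++ r', 0%N))] [:: (c, (x :: S ++ r', 0%N))]) \/
  Rl [:: (1, (x :: P ++ y :: Q ++ r', 0%N))] [::].
Proof.
move=> h2; elim/last_ind => [|P0 z IH] Q hPQ hQ.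
  left; exists 1, (y :: Q); split; first by rewrite /= hQ hPQ.
  exact: R_refl x _.
rewrite cat_rcons in hPQ; rewrite cat_rcons.
case: (ltgtP z y) => hzy.
- left; exists 1, (P0 ++ z :: y :: Q); split; first exact: pairwise_insert.
  rewrite -catA /=; exact: R_refl x _.
- have r2 := @R2 (x :: P0) 0%N z y (Q ++ r') isT.
  case: (IH (z :: Q) hPQ) => [|[c [S [hS hR]]]|hR]; first by rewrite /= hzy hQ.
    left; exists (-1 * c), S; split => //.
    apply: (R_trans r2); apply: (R_ev (R_scale (-1) hR)) => f.
    rewrite /= !ev_cons !ev_nil /=; ring.
  right; apply: (R_trans r2); apply: (R_ev (R_scale (-1) hR)) => f.
  rewrite /= !ev_cons !ev_nil /=; ring.
- right; rewrite hzy; exact: (@R0 (x :: P0) 0%N y (Q ++ r') h2 isT).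
Qed.

Lemma outer (x : X) : (2%:R != 0 :> k) -> forall r P, pairwise ltX P ->
  exists b : lc, all (fun p => basic_word p.2) b /\ Rl [:: (1, (x :: P ++ r, 0%N))] b.
Proof.
move=> h2; elim => [|y r IH] P hP.
  exists [:: (1, (x :: P, 0%N))]; rewrite cats0; split; last exact: R_refl x _.
  by rewrite /= /basic_word /= lt_sorted_pairwise hP.
case: (@insert x r y h2 P [::]) => //; first by rewrite cats0.
  move=> [c [S [hS hR]]]; have [b [hb hR']] := IH S hS.
  exists (lc_scale c b); split.
    by apply/allP => p /mapP [q hq ->] /=; exact: (allP hb q hq).
  apply: (R_trans hR); apply: (R_ev (R_scale c hR')) => f.
  by rewrite /= !ev_cons !ev_nil /= mulr1.
by move=> hR; exists [::].
Qed.

End Work.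

Theorem mainTheorem8 (k : fieldType) (d : Order.disp_t) (X : orderType d) :
  (2%:R != 0 :> k)%R ->
  (forall a : lc k X, all (fun p => basic_word p.2) a -> inI a ->
     forall w, coef a w = 0%R) /\
  (forall w : word X, valid_word w ->
     exists b : lc k X, all (fun p => basic_word p.2) b /\
       inI ((1%R, w) :: lc_scale (-1)%R b)).
Proof.
move=> h2; split; first exact: indep.
move=> [s m] hw; have [x [r [c hC]]] := @center k d X m s hw.
have [b [hb hR]] := @outer k d X x h2 r [::] isT.
exists (lc_scale c b); split.
  by apply/allP => p /mapP [q hq ->] /=; exact: (allP hb q hq).
apply: (R_trans hC); apply: (R_ev (R_scale c hR)) => f.
by rewrite /= !ev_cons !ev_nil /= mulr1.
Qed.
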